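(* Let $X$ be a real Banach space, $\tau$ the norm or weak topology, and suppose $X$ is $\tau$-ALUR. Then for every $N\in\mathbb{N}$ and every strictly convex monotone norm $\gamma:\mathbb{R}^N\to[0,\infty)$, the space $\ell_\gamma^N(X)$ is $\tau$-ALUR.
   Context: A norm $\gamma$ on $\mathbb{R}^N$ is monotone if $0\le a\le b$ coordinatewise implies $\gamma(a)\le\gamma(b)$. $\ell_\gamma^N(X)$ is $X^N$ with norm $|||(x_1,\dots,x_N)|||=\gamma(\|x_1\|,\dots,\|x_N\|)$, with $\tau$ on it being the corresponding norm or weak topology. A Banach space $Z$ is $\tau$-almost locally uniformly rotund ($\tau$-ALUR) if whenever $x,x_n\in S_Z$ and $h_m\in S_{Z^*}$ satisfy $\lim_m\lim_n h_m(\frac{x_n+x}{2})=1$, we have $x_n\to x$ in $\tau$. *)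

(* Defs.v *)
From HB Require Import structures.
From mathcomp Require Import all_boot all_order all_algebra.
From mathcomp Require Import all_classical all_reals.
From mathcomp Require Import topology normedtype sequences.
Set Implicit Arguments. Unset Strict Implicit. Unset Printing Implicit Defensive.
Import Order.TTheory GRing.Theory Num.Theory.
Import numFieldNormedType.Exports.
Local Open Scope ring_scope.
Local Open Scope classical_set_scope.

Inductive topkind := NormTop | WeakTop.

Section Generic.
Variables (R : realType) (V : lmodType R) (nrm : V -> R).

Definition is_lin (h : V -> R) : Prop :=
  forall (a : R) (u v : V), h (a *: u + v) = a * h u + h v.

Definition in_dual (h : V -> R) : Prop :=
  is_lin h /\ exists c : R, forall v, `|h v| <= c * nrm v.

(* h belongs to the unit sphere S_{V^*}: operator norm (least bounding
   constant) equal to 1 *)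
Definition in_dual_sphere (h : V -> R) : Prop :=
  [/\ is_lin h, (forall v, `|h v| <= nrm v) &
      (forall c : R, (forall v, `|h v| <= c * nrm v) -> 1 <= c)].

Definition tau_cvg (t : topkind) (u : nat -> V) (x : V) : Prop :=
  match t with
  | NormTop => (fun n => nrm (u n - x)) @ \oo --> (0 : R)
  | WeakTop => forall h, in_dual h -> (fun n => h (u n)) @ \oo --> h x
  end.

Definition ALUR (t : topkind) : Prop :=
  forall (x : V) (xn : nat -> V) (hm : nat -> V -> R),
    nrm x = 1 -> (forall n, nrm (xn n) = 1) ->
    (forall m, in_dual_sphere (hm m)) ->
    (exists L : nat -> R,
        (forall m, (fun n => hm m (2^-1 *: (xn n + x))) @ \oo --> L m) /\
        L @ \oo --> (1 : R)) ->
    tau_cvg t xn x.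
End Generic.

Section Gamma.
Variables (R : realType) (N : nat) (gamma : 'rV[R]_N -> R).

Definition is_norm_on : Prop :=
  [/\ forall v, 0 <= gamma v,
      forall v, gamma v = 0 -> v = 0,
      forall (a : R) v, gamma (a *: v) = `|a| * gamma v &
      forall u v, gamma (u + v) <= gamma u + gamma v].

Definition monotone_norm : Prop :=
  forall a b : 'rV[R]_N, (forall i, 0 <= a ord0 i <= b ord0 i) ->
    gamma a <= gamma b.

Definition strictly_convex_norm : Prop :=
  forall u v : 'rV[R]_N, gamma u = 1 -> gamma v = 1 -> u != v ->
    gamma (2^-1 *: (u + v)) < 1.
End Gamma.

Definition lgamma_norm (R : realType) (X : normedModType R) (N : nat)
  (gamma : 'rV[R]_N -> R) (x : {ffun 'I_N -> X}) : R :=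
  gamma (\row_i `|x i|).

(* Main.v *)
Require Import Defs.
From HB Require Import structures.
From mathcomp Require Import all_boot all_order all_algebra.
From mathcomp Require Import all_classical all_reals.
From mathcomp Require Import topology normedtype sequences.
From mathcomp Require Import ring lra.
Import Order.TTheory GRing.Theory Num.Theory.
Import numFieldNormedType.Exports.
Local Open Scope ring_scope.
Local Open Scope classical_set_scope.

Lemma evP (P : nat -> Prop) : (\forall n \near \oo, P n) <-> exists N, forall n, (N <= n)%N -> P n.
Proof. split=> [[N _ H]|[N H]]; exists N => //. Qed.

Definition incr (f : nat -> nat) := forall n, (f n < f n.+1)%N.

Lemma incr_lt f : incr f -> forall m n, (m < n)%N -> (f m < f n)%N.
Proof.
move=> hf m; elim=> // n IH; rewrite ltnS leq_eqVlt => /orP[/eqP->|/IH h]; first exact: hf.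
exact: ltn_trans h (hf n).
Qed.

Lemma incr_ge f : incr f -> forall n, (n <= f n)%N.
Proof. move=> hf; elim=> // n IH; exact: leq_ltn_trans IH (hf n). Qed.

Lemma incr_comp f g : incr f -> incr g -> incr (f \o g).
Proof. by move=> hf hg n /=; apply: incr_lt. Qed.

Arguments incr_lt {f}. Arguments incr_ge {f}. Arguments incr_comp {f g}.
Lemma incr_id : incr id.
Proof. by []. Qed.

Section S.
Variable R : realType.

Lemma cvgseqP (u : nat -> R) (l : R) : u @ \oo --> l <-> forall e, 0 < e -> exists N, forall n, (N <= n)%N -> `|l - u n| < e.
Proof. rewrite cvgrPdist_lt; split => H e /H; by rewrite evP. Qed.

Lemma cvg_sub (u : nat -> R) (l : R) f : incr f -> u @ \oo --> l -> (u \o f) @ \oo --> l.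
Proof.
move=> hf /cvgseqP H; apply/cvgseqP => e /H [N HN]; exists N => n Nn /=.
exact: (HN _ (leq_trans Nn (incr_ge hf n))).
Qed.

Lemma subsub (u : nat -> R) (l : R) :
  (forall f, incr f -> exists g, incr g /\ (u \o f \o g) @ \oo --> l) -> u @ \oo --> l.
Proof.
move=> H; apply/cvgseqP => e e0; apply: contrapT => H1.
have H2 : forall N, exists n, (N <= n)%N /\ e <= `|l - u n|.
  move=> N; apply: contrapT => H3; apply: H1; exists N => n Nn.
  rewrite ltNge; apply/negP => H4; apply: H3; exists n; split => //.
case/choice: H2 => c Hc.
pose f := fix f n := if n is n'.+1 then c (f n').+1 else c 0%N.
have hf : incr f by move=> n /=; have [h _] := Hc (f n).+1.
have [g [hg /cvgseqP cg]] := H f hf.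
have [N HN] := cg e e0.
have := HN N (leqnn N); rewrite /=.
have [_ ] := Hc (match g N with 0%N => 0%N | n'.+1 => (f n').+1 end).
by case: (g N) => [|n'] /= h1; rewrite ltNge h1.
Qed.

Lemma BW' (u : nat -> R) B : (forall n, `|u n| <= B) ->
  exists f, incr f /\ exists l : R, (u \o f) @ \oo --> l.
Proof.
move=> hB.
have bu : bounded_fun u.
  exists B; split; first by rewrite num_real.
  move=> M BM x _ /=; exact: le_trans (hB x) (ltW BM).
have [f hf /cvg_ex [l hl]] := bolzano_weierstrass bu.
exists f; split; last by exists l.
by move=> n; move: hf => /increasing_seqP /(_ n); rewrite ltEnat.
Qed.

Lemma diag (u : nat -> nat -> R) (B : nat -> R) : (forall k n, `|u k n| <= B k) ->
  exists f, incr f /\ forall k, exists l : R, (u k \o f) @ \oo --> l.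
Proof.
move=> hB.
have S : forall p : (nat -> nat) * nat, exists s, incr s /\ exists l : R, (u p.2 \o p.1 \o s) @ \oo --> l.
  by move=> [p k] /=; apply: (@BW' _ (B k)) => n; exact: hB.
case/choice: S => S HS.
pose psi := fix psi k := if k is k'.+1 then psi k' \o S (psi k', k) else S (id, 0%N).
have psiS k : psi k.+1 = psi k \o S (psi k, k.+1) by [].
have ipsi k : incr (psi k).
  elim: k => [|k IH]; first by have [] := HS (id, 0%N).
  rewrite psiS; apply: incr_comp => //; by have [] := HS (psi k, k.+1).
have cpsi k : exists l : R, (u k \o psi k) @ \oo --> l.
  case: k => [|k]; first by have [_ [l hl]] := HS (id, 0%N); exists l.
  by have [_ [l hl]] := HS (psi k, k.+1); exists l.
have rel k d : exists r, incr r /\ forall n, psi (k + d)%N n = psi k (r n).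
  elim: d => [|d [r [hr Hr]]]; first by exists id; split => // n; rewrite addn0.
  exists (r \o S (psi (k + d)%N, (k + d).+1)); split.
    apply: incr_comp => //; by have [] := HS (psi (k + d)%N, (k + d).+1).
  by move=> n; rewrite addnS psiS /= Hr.
exists (fun n => psi n n); split.
  move=> n; rewrite psiS /=; apply: incr_lt => //.
  have [h _] := HS (psi n, n.+1).
  exact: incr_ge h n.+1.
move=> k; have [l /cvgseqP hl] := cpsi k; exists l; apply/cvgseqP => e /hl [N HN].
exists (maxn N k) => n; rewrite geq_max => /andP[Nn kn] /=.
have [r [hr Hr]] := rel k (n - k)%N.
rewrite subnKC // in Hr; rewrite Hr; apply: (HN (r n)).
exact: leq_trans Nn (incr_ge hr n).
Qed.

Lemma diagT (T : countType) (u : T -> nat -> R) (B : T -> R) : (forall t n, `|u t n| <= B t) ->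
  exists f, incr f /\ forall t, exists l : R, (u t \o f) @ \oo --> l.
Proof.
move=> hB.
pose u' k := if pickle_inv k is Some t then u t else fun _ => 0 : R.
pose B' k := if pickle_inv k is Some t then B t else 0 : R.
have [|f [hf Hf]] := @diag u' B'.
  by move=> k n; rewrite /u' /B'; case: (pickle_inv k) => [t|]; rewrite ?normr0.
exists f; split => // t; have := Hf (pickle t); by rewrite /u' pickleK_inv.
Qed.

End S.
Arguments cvg_sub {R u l f}.

Section Lin.
Variables (R : realType) (V : lmodType R) (h : V -> R) (hl : is_lin h).

Lemma linD u v : h (u + v) = h u + h v.
Proof. by have := hl 1 u v; rewrite scale1r mul1r. Qed.

Lemma lin0 : h 0 = 0.
Proof.
have := linD 0 0; rewrite addr0; lra.
Qed.

Lemma linZ a u : h (a *: u) = a * h u.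
Proof. by have := hl a u 0; rewrite addr0 lin0 addr0. Qed.

Lemma linN u : h (- u) = - h u.
Proof. by rewrite -scaleN1r linZ mulN1r. Qed.

Lemma linB u v : h (u - v) = h u - h v.
Proof. by rewrite linD linN. Qed.

Lemma linsum (I : Type) (r : seq I) (F : I -> V) :
  h (\sum_(i <- r) F i) = \sum_(i <- r) h (F i).
Proof.
elim: r => [|a r IH]; first by rewrite !big_nil lin0.
by rewrite !big_cons linD IH.
Qed.
End Lin.
Arguments linD {R V h}. Arguments lin0 {R V h}. Arguments linZ {R V h}. Arguments linN {R V h}. Arguments linB {R V h}. Arguments linsum {R V h}.

Section Opn.
Variables (R : realType) (X : normedModType R).

Definition opnS (f : X -> R) := [set r : R | exists v : X, `|v| <= 1 /\ r = `|f v|].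
Definition opn (f : X -> R) := sup (opnS f).

Variables (f : X -> R) (fl : is_lin f) (c : R) (fc : forall v, `|f v| <= c * `|v|).

Lemma opnS_has : has_sup (opnS f).
Proof.
split; first by exists `|f 0|; exists 0; rewrite normr0.
exists `|c| => r [v [v1 ->]].
apply: le_trans (fc v) _; apply: le_trans (ler_norm _) _.
by rewrite normrM normr_id ler_piMr.
Qed.

Lemma opn_ge0 : 0 <= opn f.
Proof.
apply: le_trans (sup_upper_bound opnS_has _); first exact: (normr_ge0 (f 0)).
by exists 0; rewrite normr0.
Qed.

Lemma opn_ub v : `|f v| <= opn f * `|v|.
Proof.
have [->|v0] := eqVneq v 0.
  by rewrite lin0 // !normr0 mulr0.
have nv : 0 < `|v| by rewrite normr_gt0.
set w := `|v|^-1 *: v.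
have w1 : `|w| = 1 by rewrite normrZ normrV ?unitfE ?normr_eq0 // normr_id mulVf // normr_eq0.
have : `|f w| <= opn f by apply: sup_upper_bound opnS_has _ _; exists w; rewrite w1.
rewrite /w linZ // normrM normrV ?unitfE ?normr_eq0 // normr_id.
by rewrite mulrC -ler_pdivlMr ?invr_gt0 // invrK mulrC.
Qed.

Lemma opn_approx e : 0 < e -> exists v, `|v| <= 1 /\ opn f - e < f v.
Proof.
move=> e0; have [r [v [v1 ->]] hr] := sup_adherent e0 opnS_has.
have [fv0|fv0] := leP 0 (f v).
  by exists v; split => //; rewrite -(ger0_norm fv0).
exists (- v); split; first by rewrite normrN.
by rewrite (linN fl) -(ltr0_norm fv0).
Qed.

Lemma opn_least c' : 0 <= c' -> (forall v, `|f v| <= c' * `|v|) -> opn f <= c'.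
Proof.
move=> c0 hc; apply: ge_sup; first by exists `|f 0|; exists 0; rewrite normr0.
move=> r [v [v1 ->]]; apply: le_trans (hc v) _.
by rewrite ler_piMr.
Qed.

Lemma opn_sphere : 0 < opn f -> in_dual_sphere (fun v : X => `|v|) (fun v => f v / opn f).
Proof.
move=> o0; split.
- by move=> a u v /=; rewrite fl mulrDl mulrA.
- move=> v; rewrite normrM normfV (gtr0_norm o0) ler_pdivrMr //.
  by rewrite mulrC opn_ub.
- move=> c' hc'.
  have [|v [v1 hv]] := @opn_approx (opn f / 2); first by rewrite divr_gt0.
  have fvpos : 0 < f v / opn f.
    rewrite divr_gt0 //; apply: le_lt_trans hv; rewrite subr_ge0.
    lra.
  have c'0 : 0 < c'.
    have h1 := hc' v; rewrite (gtr0_norm fvpos) in h1.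
    have h2 := lt_le_trans fvpos h1.
    have nv : 0 < `|v|.
      rewrite lt_neqAle normr_ge0 andbT eq_sym; apply/negP => /eqP nv0.
      by rewrite nv0 mulr0 ltxx in h2.
    nra.
  have : opn f <= c' * opn f.
    apply: opn_least; first by rewrite mulr_ge0 // ltW.
    move=> u; have := hc' u; rewrite normrM normfV (gtr0_norm o0) ler_pdivrMr //.
    by rewrite mulrAC.
  move=> h3; nra.
Qed.

End Opn.
Arguments opnS_has {R X f c} fc.
Arguments opn_ge0 {R X f c} fc.
Arguments opn_ub {R X f} fl {c} fc v.
Arguments opn_approx {R X f} fl {c}.
Arguments opn_least {R X f} c'.
Arguments opn_sphere {R X f} fl {c}.
Arguments opn {R X}. Arguments opnS {R X}.

Section Cvg.
Variable R : realType.

Lemma cvg_sumR (I : Type) (r : seq I) (F : I -> nat -> R) (a : I -> R) :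
  (forall i, F i @ \oo --> a i) ->
  (fun n => \sum_(i <- r) F i n) @ \oo --> \sum_(i <- r) a i.
Proof.
move=> H; elim: r => [|i r IH].
  have -> : (fun n => \sum_(i <- [::]) F i n) = (fun _ => 0) by apply/funext => n; rewrite big_nil.
  rewrite big_nil; exact: cvg_cst.
have -> : (fun n => \sum_(j <- i :: r) F j n) = (fun n => F i n + \sum_(j <- r) F j n).
  by apply/funext => n; rewrite big_cons.
rewrite big_cons; exact: cvgD.
Qed.

Lemma cvg_dom {u} w (l : R) : (forall n, `|l - u n| <= w n) -> w @ \oo --> 0 -> u @ \oo --> l.
Proof.
move=> hw /cvgseqP hc; apply/cvgseqP => e /hc [N HN]; exists N => n /HN.
rewrite sub0r normrN => h; apply: le_lt_trans (hw n) _; exact: le_lt_trans (ler_norm _) h.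
Qed.

Lemma cvg_le {u v : nat -> R} {a b : R} : u @ \oo --> a -> v @ \oo --> b -> (forall n, u n <= v n) -> a <= b.
Proof. move=> ha hb h; apply: (ler_cvg_to ha hb); exact: nearW. Qed.

Lemma cvg_uniq {u : nat -> R} {a b : R} : u @ \oo --> a -> u @ \oo --> b -> a = b.
Proof. move=> ha hb; apply/eqP; rewrite eq_le (cvg_le ha hb) // (cvg_le hb ha) //. Qed.

End Cvg.

Section G.
Variables (R : realType) (N : nat) (gamma : 'rV[R]_N -> R).
Hypothesis hn : is_norm_on gamma.
Hypothesis hm : monotone_norm gamma.

Definition E (j : 'I_N) : 'rV[R]_N := delta_mx 0 j.

Lemma g_ge0 v : 0 <= gamma v. Proof. by case: hn => H _ _ _; exact: H. Qed.
Lemma g_Z a v : gamma (a *: v) = `|a| * gamma v. Proof. by case: hn => _ _ H _; exact: H. Qed.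
Lemma g_tri u v : gamma (u + v) <= gamma u + gamma v. Proof. by case: hn => _ _ _ H; exact: H. Qed.
Lemma g_def v : gamma v = 0 -> v = 0. Proof. by case: hn => _ H _ _; exact: H. Qed.
Lemma g0 : gamma 0 = 0. Proof. by have := g_Z 0 0; rewrite scale0r normr0 mul0r. Qed.
Lemma g_N v : gamma (- v) = gamma v. Proof. by rewrite -scaleN1r g_Z normrN normr1 mul1r. Qed.

Lemma g_sum (I : Type) (r : seq I) (F : I -> 'rV[R]_N) :
  gamma (\sum_(i <- r) F i) <= \sum_(i <- r) gamma (F i).
Proof.
elim: r => [|i r IH]; first by rewrite !big_nil g0.
rewrite !big_cons; apply: le_trans (g_tri _ _) _; exact: lerD.
Qed.

Lemma g_bound u : gamma u <= \sum_j `|u ord0 j| * gamma (E j).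
Proof.
rewrite {1}(row_sum_delta u); apply: le_trans (g_sum _ _ _) _.
by apply: ler_sum => j _; rewrite g_Z.
Qed.

Lemma g_diff u v : `|gamma u - gamma v| <= gamma (u - v).
Proof.
have h1 : gamma u <= gamma v + gamma (u - v) by rewrite -{1}(subrKC v u); exact: g_tri.
have h2 : gamma v <= gamma u + gamma (u - v).
  by rewrite -(g_N (u - v)) opprB -{1}(subrKC u v); exact: g_tri.
rewrite ler_norml; apply/andP; split; lra.
Qed.

Lemma g_cont (un : nat -> 'rV[R]_N) (u : 'rV[R]_N) :
  (forall j, (fun n => un n ord0 j) @ \oo --> u ord0 j) ->
  (fun n => gamma (un n)) @ \oo --> gamma u.
Proof.
move=> H.
apply: (@cvg_dom _ _ (fun n => \sum_j `|u ord0 j - un n ord0 j| * gamma (E j))).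
  move=> n; apply: le_trans (g_diff _ _) _; apply: le_trans (g_bound _) _.
  by apply: ler_sum => j _; rewrite !mxE.
suff h : (fun n => \sum_j `|u ord0 j - un n ord0 j| * gamma (E j)) @ \oo --> \sum_(j < N) 0 * gamma (E j).
  by rewrite big1 in h => // j _; rewrite mul0r.
apply: (@cvg_sumR _ _ _ (fun j n => `|u ord0 j - un n ord0 j| * gamma (E j)) (fun j => 0 * gamma (E j))) => j.
apply: cvgMr_tmp.
have := H j => /cvgseqP hj; apply/cvgseqP => e /hj [M HM]; exists M => n /HM.
by rewrite sub0r normrN normr_id.
Qed.

Lemma gE_pos j : 0 < gamma (E j).
Proof.
rewrite lt_def g_ge0 andbT; apply/eqP => /g_def /matrixP /(_ ord0 j).
by rewrite !mxE !eqxx /= => /eqP; rewrite oner_eq0.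
Qed.

Lemma g_mono (a b : 'rV[R]_N) : (forall i, 0 <= a ord0 i <= b ord0 i) -> gamma a <= gamma b.
Proof. exact: hm. Qed.

Section Prod.
Variable X : normedModType R.
Definition ins (j : 'I_N) (v : X) : {ffun 'I_N -> X} := [ffun k => if k == j then v else 0].
Definition nrow (z : {ffun 'I_N -> X}) : 'rV[R]_N := \row_i `|z i|.

Lemma lg_def (z : {ffun 'I_N -> X}) : lgamma_norm gamma z = gamma (nrow z). Proof. by []. Qed.

Lemma lg_ins j v : lgamma_norm gamma (ins j v) = `|v| * gamma (E j).
Proof.
rewrite lg_def -(ger0_norm (normr_ge0 v)) -g_Z; congr gamma.
apply/rowP => k; rewrite /nrow /E !mxE ffunE eqxx /=; case: eqP => _; rewrite ?normr0 ?mulr0 ?mulr1 //.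
Qed.

Lemma coord_le (z : {ffun 'I_N -> X}) j : `|z j| * gamma (E j) <= lgamma_norm gamma z.
Proof.
rewrite lg_def -(ger0_norm (normr_ge0 (z j))) -g_Z; apply: g_mono => i.
rewrite /nrow /E !mxE eqxx /=; case: eqP => [->|_]; rewrite ?mulr1 ?mulr0 ?lexx ?normr_ge0 //.
Qed.

Lemma z_decomp (z : {ffun 'I_N -> X}) : z = \sum_j ins j (z j).
Proof.
apply/ffunP => k; rewrite sum_ffunE (bigD1 k) //= ffunE eqxx big1 ?addr0 // => i ik.
by rewrite ffunE; case: eqP => // ki; move: ik; rewrite ki eqxx.
Qed.

Lemma ins_lin j a u v : ins j (a *: u + v) = a *: ins j u + ins j v.
Proof. apply/ffunP => k; rewrite !ffunE; case: eqP => _ //; by rewrite scaler0 addr0. Qed.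

Lemma lg_ge0 (z : {ffun 'I_N -> X}) : 0 <= lgamma_norm gamma z. Proof. exact: g_ge0. Qed.

Lemma lg_ins_dual (h : {ffun 'I_N -> X} -> R) j : in_dual (lgamma_norm gamma) h ->
  in_dual (fun v : X => `|v|) (fun v => h (ins j v)).
Proof.
move=> [hl [c hc]]; split.
  by move=> a u v; rewrite ins_lin hl.
exists (c * gamma (E j)) => v; apply: le_trans (hc _) _.
by rewrite lg_ins -mulrA [`|v| * _]mulrC.
Qed.

Lemma prod_tau t (xn : nat -> {ffun 'I_N -> X}) (x : {ffun 'I_N -> X}) :
  (forall j, tau_cvg (fun v : X => `|v|) t (fun n => xn n j) (x j)) ->
  tau_cvg (lgamma_norm gamma) t xn x.
Proof.
case: t => /= H.
  apply: (@cvg_dom _ _ (fun n => \sum_j `|xn n j - x j| * gamma (E j))).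
    move=> n; rewrite sub0r normrN ger0_norm ?lg_ge0 // lg_def.
    apply: le_trans (g_bound _) _; apply: ler_sum => j _.
    by rewrite !mxE normr_id !ffunE.
  suff h : (fun n => \sum_j `|xn n j - x j| * gamma (E j)) @ \oo --> \sum_(j < N) 0 * gamma (E j).
    by rewrite big1 in h => // j _; rewrite mul0r.
  apply: (@cvg_sumR _ _ _ (fun j n => `|xn n j - x j| * gamma (E j)) (fun j => 0 * gamma (E j))) => j.
  apply: cvgMr_tmp; exact: H j.
move=> h hd.
have hl : is_lin h by case: hd.
have -> : (fun n => h (xn n)) = (fun n => \sum_j h (ins j (xn n j))).
  by apply/funext => n; rewrite {1}(z_decomp (xn n)) (linsum hl).
rewrite {1}(z_decomp x) (linsum hl); apply: cvg_sumR => j.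
exact: (H j (fun v => h (ins j v)) (lg_ins_dual h j hd)).
Qed.
End Prod.
End G.
Arguments cvg_le {R u v a b}. Arguments cvg_uniq {R u a b}. Arguments cvg_dom {R u}.
Arguments E {R N}. Arguments ins {R N X}. Arguments nrow {R N X}.
Arguments g_ge0 {R N gamma}. Arguments g_Z {R N gamma}. Arguments g_tri {R N gamma}.
Arguments g_def {R N gamma}. Arguments g0 {R N gamma}. Arguments g_N {R N gamma}.
Arguments g_sum {R N gamma} hn {I}. Arguments g_bound {R N gamma}. Arguments g_diff {R N gamma}.
Arguments g_cont {R N gamma} hn {un u}. Arguments gE_pos {R N gamma}. Arguments g_mono {R N gamma} hm {a b}.
Arguments lg_def {R N gamma X}. Arguments lg_ins {R N gamma} hn {X}. Arguments coord_le {R N gamma} hn hm {X}.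
Arguments z_decomp {R N X}. Arguments ins_lin {R N X}. Arguments lg_ge0 {R N gamma} hn {X}.
Arguments lg_ins_dual {R N gamma} hn {X}. Arguments prod_tau {R N gamma} hn {X}.

Section Core.
Variables (R : realType) (X : normedModType R) (N : nat) (gamma : 'rV[R]_N -> R).
Hypothesis hn : is_norm_on gamma.
Hypothesis hm : monotone_norm gamma.
Hypothesis hs : strictly_convex_norm gamma.
Variable t : topkind.
Hypothesis ALURX : ALUR (fun x : X => `|x|) t.

Local Notation V := {ffun 'I_N -> X}.
Local Notation lg := (lgamma_norm gamma).

Variables (x : V) (xn : nat -> V) (hmf : nat -> V -> R) (L : nat -> R).
Hypothesis nx : lg x = 1.
Hypothesis nxn : forall n, lg (xn n) = 1.
Hypothesis hd : forall m, in_dual_sphere lg (hmf m).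
Hypothesis hL : forall m, (fun n => hmf m (2^-1 *: (xn n + x))) @ \oo --> L m.
Hypothesis L1 : L @ \oo --> (1 : R).

Definition fj (j : 'I_N) m (v : X) := hmf m (ins j v).

Lemma fj_lin j m : is_lin (fj j m).
Proof. by move=> a u v; rewrite /fj ins_lin; case: (hd m) => hl _ _; exact: hl. Qed.

Lemma fj_bnd j m v : `|fj j m v| <= gamma (E j) * `|v|.
Proof.
rewrite /fj; case: (hd m) => _ hb _; apply: le_trans (hb _) _.
by rewrite (lg_ins hn) mulrC.
Qed.

Lemma hmf_lin m : is_lin (hmf m).
Proof. by case: (hd m). Qed.

Lemma hmf_bnd m z : `|hmf m z| <= lg z.
Proof. by case: (hd m) => _ hb _; exact: hb. Qed.

Lemma hmf_dec m z : hmf m z = \sum_j fj j m (z j).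
Proof. by rewrite {1}(z_decomp z) (linsum (hmf_lin m)). Qed.

Definition op j m := opn (fj j m).

Lemma op_ge0 j m : 0 <= op j m.
Proof. exact: (opn_ge0 (fj_bnd j m)). Qed.

Lemma op_ub j m v : `|fj j m v| <= op j m * `|v|.
Proof. exact: (opn_ub (fj_lin j m) (fj_bnd j m)). Qed.

Lemma op_le j m : op j m <= gamma (E j).
Proof. apply: opn_least => //; [exact: g_ge0 | exact: fj_bnd]. Qed.

Lemma dual_ineq m (c : 'rV[R]_N) : (forall j, 0 <= c ord0 j) ->
  \sum_j op j m * c ord0 j <= gamma c.
Proof.
move=> c0.
have H : forall e, 0 < e -> \sum_j op j m * c ord0 j <= gamma c + e * \sum_j c ord0 j.
  move=> e e0.
  have : forall j, exists v : X, `|v| <= 1 /\ op j m - e < fj j m v.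
    move=> j; exact: (opn_approx (fj_lin j m) (fj_bnd j m)).
  case/choice => v hv.
  pose z : V := [ffun k => c ord0 k *: v k].
  have h1 : hmf m z <= gamma c.
    apply: le_trans (ler_norm _) _; apply: le_trans (hmf_bnd _ _) _.
    rewrite lg_def; apply: (g_mono hm) => i; rewrite /nrow !mxE ffunE normr_ge0 /=.
    rewrite normrZ ger0_norm //; have [hv1 _] := hv i.
    by rewrite ler_piMr.
  apply: le_trans _ (lerD h1 (lexx _)) => {h1}.
  rewrite hmf_dec mulr_sumr -lerBlDr -sumrB; apply: ler_sum => j _.
  rewrite /z ffunE (linZ (fj_lin j m)) -mulrBl mulrC.
  apply: ler_wpM2l => //; have [_ hv2] := hv j; lra.
apply/ler_addgt0Pr => e e0.
have C0 : 0 <= \sum_j c ord0 j by apply: sumr_ge0 => j _.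
have e'0 : 0 < e / (\sum_j c ord0 j + 1) by rewrite divr_gt0 // ltr_wpDl.
apply: le_trans (H _ e'0) _; rewrite lerD2l.
rewrite mulrAC ler_pdivrMr; last by rewrite ltr_wpDl.
rewrite ler_pM2l //; lra.
Qed.


Variable b : 'I_N -> R.
Hypothesis hb : forall j, (fun n => `|xn n j|) @ \oo --> b j.
Variable l : 'I_N -> nat -> R.
Hypothesis hl : forall j m, (fun n => fj j m (xn n j)) @ \oo --> l j m.
Variable ph : 'I_N -> R.
Hypothesis hph : forall j, (fun m => op j m) @ \oo --> ph j.

Lemma half_le n m : hmf m (2^-1 *: (xn n + x)) <= gamma (2^-1 *: (nrow (xn n) + nrow x)).
Proof.
apply: le_trans (ler_norm _) _; apply: le_trans (hmf_bnd _ _) _.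
rewrite lg_def; apply: (g_mono hm) => i; rewrite /nrow !mxE !ffunE normr_ge0 /=.
rewrite normrZ ger0_norm ?invr_ge0 ?ler0n //; apply: ler_wpM2l; first by rewrite invr_ge0 ler0n.
exact: ler_normD.
Qed.

Lemma cvg_nrow (un : nat -> V) (c : 'I_N -> R) : (forall j, (fun n => `|un n j|) @ \oo --> c j) ->
  forall j, (fun n => nrow (un n) ord0 j) @ \oo --> (\row_k c k) ord0 j.
Proof.
move=> H j; rewrite mxE.
have -> : (fun n => nrow (un n) ord0 j) = (fun n => `|un n j|) by apply/funext => n; rewrite mxE.
exact: H.
Qed.

Lemma b_eq_a j : b j = `|x j|.
Proof.
have gb1 : gamma (\row_k b k) = 1.
  apply: (cvg_uniq (g_cont hn (@cvg_nrow xn b hb))).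
  have -> : (fun n => gamma (nrow (xn n))) = (fun _ => 1) by apply/funext => n; exact: nxn.
  exact: cvg_cst.
have hx : forall j, (fun n : nat => `|x j|) @ \oo --> `|x j| by move=> k; exact: cvg_cst.
have gmid : 1 <= gamma (2^-1 *: (\row_k b k + nrow x)).
  have Hm : forall m, L m <= gamma (2^-1 *: (\row_k b k + nrow x)).
    move=> m; apply: (cvg_le (hL m) _ (fun n => half_le n m)).
    apply: (g_cont hn) => k.
    have -> : (fun n => (2^-1 *: (nrow (xn n) + nrow x)) ord0 k) = (fun n => 2^-1 * (`|xn n k| + `|x k|)).
      by apply/funext => n; rewrite !mxE.
    rewrite !mxE; apply: cvgMl_tmp; apply: cvgD; [exact: hb | exact: cvg_cst].
  exact: (cvg_le L1 (cvg_cst _) Hm).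
have : \row_k b k = nrow x.
  apply/eqP; apply: contraT => hne.
  have := hs _ _ gb1 nx hne; rewrite ltNge gmid //.
by move/matrixP => /(_ ord0 j); rewrite !mxE.
Qed.

Definition lam j m := 2^-1 * (l j m + fj j m (x j)).

Lemma half_dec n m : hmf m (2^-1 *: (xn n + x)) = \sum_j 2^-1 * (fj j m (xn n j) + fj j m (x j)).
Proof.
rewrite hmf_dec; apply: eq_bigr => j _; rewrite !ffunE (linZ (fj_lin j m)) (linD (fj_lin j m)) //.
Qed.

Lemma L_sum m : L m = \sum_j lam j m.
Proof.
apply: (cvg_uniq (hL m)).
have -> : (fun n => hmf m (2^-1 *: (xn n + x))) = (fun n => \sum_j 2^-1 * (fj j m (xn n j) + fj j m (x j))).
  by apply/funext => n; exact: half_dec.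
apply: (@cvg_sumR _ _ _ (fun j n => 2^-1 * (fj j m (xn n j) + fj j m (x j))) (fun j => lam j m)) => j.
apply: cvgMl_tmp; apply: cvgD => //; exact: cvg_cst.
Qed.

Lemma lam_le j m : lam j m <= op j m * `|x j|.
Proof.
have e1 : (fun n => fj j m ((2^-1 *: (xn n + x)) j)) @ \oo --> lam j m.
  have -> : (fun n => fj j m ((2^-1 *: (xn n + x)) j)) = (fun n => 2^-1 * (fj j m (xn n j) + fj j m (x j))).
    by apply/funext => n; rewrite !ffunE (linZ (fj_lin j m)) (linD (fj_lin j m)).
  apply: cvgMl_tmp; apply: cvgD => //; exact: cvg_cst.
have e2 : (fun n => op j m * (2^-1 * (`|xn n j| + `|x j|))) @ \oo --> op j m * (2^-1 * (b j + `|x j|)).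
  apply: cvgMl_tmp; apply: cvgMl_tmp; apply: cvgD => //; exact: cvg_cst.
have := cvg_le e1 e2; rewrite b_eq_a.
have -> : 2^-1 * (`|x j| + `|x j|) = `|x j| by lra.
apply => n; apply: le_trans (ler_norm _) _; apply: le_trans (op_ub _ _ _) _.
apply: ler_wpM2l; first exact: op_ge0.
rewrite !ffunE normrZ ger0_norm ?invr_ge0 ?ler0n //; apply: ler_wpM2l; first by rewrite invr_ge0 ler0n.
exact: ler_normD.
Qed.

Lemma sum_op_ge m : L m <= \sum_j op j m * `|x j|.
Proof. rewrite L_sum; apply: ler_sum => j _; exact: lam_le. Qed.

Lemma sum_op_le m : \sum_j op j m * `|x j| <= 1.
Proof.
rewrite -nx lg_def; have := @dual_ineq m (nrow x).
under eq_bigr do rewrite mxE.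
apply => j; rewrite mxE; exact: normr_ge0.
Qed.

Lemma gap i m : op i m * `|x i| - lam i m <= 1 - L m.
Proof.
have h1 : \sum_j (op j m * `|x j| - lam j m) <= 1 - L m.
  rewrite sumrB -L_sum; have := sum_op_le m; lra.
apply: le_trans _ h1; rewrite (bigD1 i) //= lerDl; apply: sumr_ge0 => j _.
rewrite subr_ge0; exact: lam_le.
Qed.

Lemma ph_ge0 j : 0 <= ph j.
Proof. exact: (cvg_le (cvg_cst _) (hph j) (fun m => op_ge0 j m)). Qed.

Lemma ph_ineq (c : 'rV[R]_N) : (forall j, 0 <= c ord0 j) -> \sum_j ph j * c ord0 j <= gamma c.
Proof.
move=> c0.
have hc : (fun m => \sum_j op j m * c ord0 j) @ \oo --> \sum_j ph j * c ord0 j.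
  apply: (@cvg_sumR _ _ _ (fun j m => op j m * c ord0 j) (fun j => ph j * c ord0 j)) => j.
  exact: cvgMr_tmp.
exact: (cvg_le hc (cvg_cst _) (fun m => @dual_ineq m c c0)).
Qed.

Lemma ph_sum : \sum_j ph j * `|x j| = 1.
Proof.
apply/eqP; rewrite eq_le; apply/andP; split.
  have := @ph_ineq (nrow x); under eq_bigr do rewrite mxE.
  rewrite -lg_def nx; apply => j; rewrite mxE; exact: normr_ge0.
have hc : (fun m => \sum_j op j m * `|x j|) @ \oo --> \sum_j ph j * `|x j|.
  apply: (@cvg_sumR _ _ _ (fun j m => op j m * `|x j|) (fun j => ph j * `|x j|)) => j.
  exact: cvgMr_tmp.
exact: (cvg_le L1 hc sum_op_ge).
Qed.

Lemma ph_pos i : 0 < `|x i| -> 0 < ph i.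
Proof.
move=> xi0; rewrite lt_def ph_ge0 andbT; apply/negP => /eqP phi0.
pose c : 'rV[R]_N := \row_j (if j == i then 0 else `|x j|).
have c0 : forall j, 0 <= c ord0 j by move=> j; rewrite mxE; case: eqP.
have phc : \sum_j ph j * c ord0 j = 1.
  rewrite -ph_sum; apply: eq_bigr => j _; rewrite mxE; case: eqP => [->|//].
  by rewrite phi0 !mul0r.
have gc1 : gamma c = 1.
  apply/eqP; rewrite eq_le; apply/andP; split; last by rewrite -phc; exact: ph_ineq.
  rewrite -nx lg_def; apply: (g_mono hm) => j; rewrite !mxE; case: eqP => _.
    by rewrite lexx normr_ge0.
  by rewrite lexx normr_ge0.
have cne : c != nrow x.
  apply/negP => /eqP /matrixP /(_ ord0 i); rewrite !mxE eqxx => h.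
  by move: xi0; rewrite -h ltxx.
have := hs _ _ gc1 nx cne.
have d0 : forall j, 0 <= (2^-1 *: (c + nrow x)) ord0 j.
  move=> j; rewrite !mxE; apply: mulr_ge0; first by rewrite invr_ge0 ler0n.
  apply: addr_ge0; last exact: normr_ge0.
  by case: eqP => // _; exact: normr_ge0.
have := @ph_ineq _ d0.
have -> : \sum_j ph j * (2^-1 *: (c + nrow x)) ord0 j = \sum_j (2^-1 * (ph j * c ord0 j) + 2^-1 * (ph j * `|x j|)).
  apply: eq_bigr => j _; rewrite !mxE; ring.
rewrite big_split /= -!mulr_sumr.
rewrite phc ph_sum; lra.
Qed.


Lemma coord_cvg i : tau_cvg (fun v : X => `|v|) t (fun n => xn n i) (x i).
Proof.
have hbi := hb i; rewrite b_eq_a in hbi.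
have [xi0|xipos] := eqVneq `|x i| 0.
  have xi0' : x i = 0 by apply/normr0_eq0.
  case: t => /=.
    rewrite xi0'; have -> : (fun n => `|xn n i - 0|) = (fun n => `|xn n i|).
      by apply/funext => n; rewrite subr0.
    by rewrite -xi0.
  move=> h [hlh [c hc]]; rewrite xi0' (lin0 hlh).
  apply: (@cvg_dom _ _ (fun n => c * `|xn n i|) 0).
    by move=> n; rewrite sub0r normrN; exact: hc.
  have h1 := cvgMl_tmp (a := c) hbi; rewrite xi0 mulr0 in h1; exact: h1.
have apos : 0 < `|x i| by rewrite lt_def xipos normr_ge0.
have phpos := @ph_pos i apos.
have [M HM] : exists M, forall m, (M <= m)%N -> ph i / 2 < op i m.
  have := hph i => /cvgseqP /(_ (ph i / 2)) []; first by rewrite divr_gt0.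
  move=> M HM; exists M => m /HM h; move: h; rewrite ltr_norml; lra.
have [N0 HN0] : exists N0, forall n, (N0 <= n)%N -> 0 < `|xn n i|.
  have := hbi => /cvgseqP /(_ _ apos) [N0 HN0]; exists N0 => n /HN0; rewrite ltr_norml; lra.
pose y := `|x i|^-1 *: x i.
pose yn n := if xn n i == 0 then y else `|xn n i|^-1 *: xn n i.
have ny : `|y| = 1 by rewrite /y normrZ normfV normr_id mulVf.
have nyn n : `|yn n| = 1.
  rewrite /yn; case: eqP => // /eqP h; rewrite normrZ normfV normr_id mulVf // normr_eq0 //.
have opos m : 0 < op i (m + M).
  apply: lt_trans (HM _ (leq_addl _ _)); by rewrite divr_gt0.
pose gm m := fun v => fj i (m + M) v / op i (m + M).
pose K m := lam i (m + M) / (`|x i| * op i (m + M)).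
have gms m : in_dual_sphere (fun v : X => `|v|) (gm m).
  exact: (opn_sphere (fj_lin i (m + M)) (fj_bnd i (m + M)) (opos m)).
have convn m : (fun n => gm m (2^-1 *: (yn n + y))) @ \oo --> K m.
  set F := fun n => 2^-1 * ((`|xn n i|)^-1 * fj i (m + M) (xn n i) + `|x i|^-1 * fj i (m + M) (x i)) / op i (m + M).
  have EF : F @ \oo --> K m.
    have -> : K m = 2^-1 * ((`|x i|)^-1 * l i (m + M) + `|x i|^-1 * fj i (m + M) (x i)) / op i (m + M).
      rewrite /K /lam; field; rewrite xipos andbT lt0r_neq0 // opos.
    apply: cvgMr_tmp; apply: cvgMl_tmp; apply: cvgD; last exact: cvg_cst.
    apply: cvgM; last exact: hl.
    exact: cvgV.
  apply: cvg_trans _ EF; apply: near_eq_cvg; apply/evP; exists N0 => n /HN0 hn0.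
  rewrite /F /gm /yn; case: eqP => [h0|_]; first by move: hn0; rewrite h0 normr0 ltxx.
  rewrite (linZ (fj_lin i (m + M))) (linD (fj_lin i (m + M))) !(linZ (fj_lin i (m + M))) //.
have convK : K @ \oo --> (1 : R).
  apply: (@cvg_dom _ _ (fun m => (1 - L (m + M)) * (2 / (`|x i| * ph i)))).
    move=> m; rewrite /K.
    have A0 : 0 < `|x i| * op i (m + M) by rewrite mulr_gt0.
    have h1 := lam_le i (m + M).
    have h2 := gap i (m + M).
    have h3 : ph i / 2 < op i (m + M) by apply: HM; exact: leq_addl.
    have -> : 1 - lam i (m + M) / (`|x i| * op i (m + M)) =
              (op i (m + M) * `|x i| - lam i (m + M)) / (`|x i| * op i (m + M)).
      by field; rewrite lt0r_neq0.
    rewrite ger0_norm; last by rewrite divr_ge0 ?(ltW A0) // subr_ge0.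
    have D0 : 0 <= op i (m + M) * `|x i| - lam i (m + M) by rewrite subr_ge0.
    have G0 := le_trans D0 h2.
    have k : 1 <= 2 / (`|x i| * ph i) * (`|x i| * op i (m + M)).
      have -> : 2 / (`|x i| * ph i) * (`|x i| * op i (m + M)) = 2 * op i (m + M) / ph i.
        by field; rewrite xipos andbT lt0r_neq0.
      rewrite ler_pdivlMr // mul1r; lra.
    rewrite ler_pdivrMr //; apply: (le_trans h2).
    by rewrite -mulrA ler_peMr.
  have hLM : (fun m => L (m + M)) @ \oo --> (1 : R).
    exact: (@cvg_sub _ L 1 (fun m => (m + M)%N) (fun m => ltnSn (m + M)) L1).
  have -> : (0 : R) = (1 - 1) * (2 / (`|x i| * ph i)) by rewrite subrr mul0r.
  apply: cvgMr_tmp; apply: cvgB => //; exact: cvg_cst.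
have hy := @ALURX y yn gm ny nyn gms (ex_intro _ K (conj convn convK)).
have xnE n : xn n i = `|xn n i| *: yn n.
  rewrite /yn; case: eqP => [->|/eqP h]; first by rewrite normr0 scale0r.
  by rewrite scalerA divff ?scale1r // normr_eq0.
have xE : x i = `|x i| *: y by rewrite /y scalerA divff ?scale1r.
case: t hy => /= hy.
  apply: (@cvg_dom _ _ (fun n => `|(`|xn n i| - `|x i|)| + `|x i| * `|yn n - y|) 0).
    move=> n; rewrite sub0r normrN normr_id {1}xnE {1}xE.
    have -> : `|xn n i| *: yn n - `|x i| *: y = (`|xn n i| - `|x i|) *: yn n + `|x i| *: (yn n - y).
      by rewrite scalerBl scalerBr addrA subrK.
    apply: le_trans (ler_normD _ _) _; rewrite !normrZ nyn mulr1 normr_id lexx //.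
  have -> : (0 : R) = `|0 : R| + `|x i| * 0 by rewrite normr0 mulr0 addr0.
  apply: cvgD; last exact: cvgMl_tmp.
  apply: cvg_norm; rewrite -(subrr `|x i|); apply: cvgB => //; exact: cvg_cst.
move=> h hdh; have hlh : is_lin h by case: hdh.
have -> : (fun n => h (xn n i)) = (fun n => `|xn n i| * h (yn n)).
  by apply/funext => n; rewrite {1}xnE (linZ hlh).
rewrite xE (linZ hlh); apply: cvgM => //; exact: hy.
Qed.

Lemma core : tau_cvg lg t xn x.
Proof. apply: (prod_tau hn) => i; exact: coord_cvg. Qed.

End Core.
Arguments fj {R X N}. Arguments op {R X N}.
Arguments op_ge0 {R X N gamma} hn {hmf} hd. Arguments op_le {R X N gamma} hn {hmf} hd.
Arguments fj_bnd {R X N gamma} hn {hmf} hd.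

Lemma tau_sub (R : realType) (V : lmodType R) (nrm : V -> R) t (xn : nat -> V) (x : V) :
  (forall f, incr f -> exists g, incr g /\ tau_cvg nrm t (xn \o f \o g) x) -> tau_cvg nrm t xn x.
Proof.
case: t => /= H.
  apply: (@subsub _ (fun n => nrm (xn n - x)) 0) => f hf.
  by have [g [hg Hg]] := H f hf; exists g.
move=> h hd; apply: (@subsub _ (fun n => h (xn n)) (h x)) => f hf.
by have [g [hg Hg]] := H f hf; exists g; split => //; exact: Hg.
Qed.

Theorem theorem3p5 (R : realType) (X : completeNormedModType R) (t : topkind) :
  ALUR (fun x : X => `|x|) t ->
  forall (N : nat) (gamma : 'rV[R]_N -> R),
    is_norm_on gamma -> monotone_norm gamma -> strictly_convex_norm gamma ->
    ALUR (@lgamma_norm R X N gamma) t.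
Proof.
move=> ALURX N gamma hn hm hs x xn hmf nx nxn hd [L [hL L1]].
have [psi [hpsi Hpsi]] : exists psi, incr psi /\ forall j, exists l : R,
    ((fun m => op hmf j m) \o psi) @ \oo --> l.
  apply: (@diagT R _ (fun j m => op hmf j m) (fun j => gamma (E j))) => j m.
  rewrite ger0_norm; [exact: (op_le hn hd) | exact: (op_ge0 hn hd)].
have [ph hph] := choice Hpsi.
pose hmf' m := hmf (psi m).
pose L' m := L (psi m).
have hd' : forall m, in_dual_sphere (lgamma_norm gamma) (hmf' m) by move=> m; exact: hd.
have L1' : L' @ \oo --> (1 : R) by exact: (cvg_sub hpsi L1).
apply: tau_sub => f hf.
pose T := ('I_N * option nat)%type.
pose u (p : T) (n : nat) : R := match p with
  | (j, None) => `|xn (f n) j|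
  | (j, Some m) => fj hmf' j m (xn (f n) j) end.
pose B (p : T) : R := match p with (j, None) => (gamma (E j))^-1 | (j, Some m) => 1 end.
have [g [hg Hg]] : exists g, incr g /\ forall p, exists l : R, (u p \o g) @ \oo --> l.
  apply: (@diagT R T u B) => -[j [m|]] n /=.
    apply: le_trans (fj_bnd hn hd' j m _) _; rewrite mulrC.
    by have := coord_le hn hm (xn (f n)) j; rewrite nxn.
  rewrite normr_id -[(gamma (E j))^-1]mul1r ler_pdivlMr ?(gE_pos hn) //.
  by have := coord_le hn hm (xn (f n)) j; rewrite nxn.
have [lim hlim] := choice Hg.
have hfg := incr_comp hf hg.
have := @core R X N gamma hn hm hs t ALURX x (xn \o f \o g) hmf' L' nx
  (fun n => nxn _) hd' (fun m => cvg_sub hfg (hL (psi m))) L1'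
  (fun j => lim (j, None)) (fun j => hlim (j, None))
  (fun j m => lim (j, Some m)) (fun j m => hlim (j, Some m)) ph hph.
by exists g.
Qed.
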